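(* Let $H$ be a twin-free simple graph on $n$ vertices, and let $i(H)$ be the minimum cardinality of an identifying code of $H$. Label the vertices of $H$ by $1,\dots,n$ via a bijection chosen uniformly at random among all $n!$ bijections, obtaining a graph $G$ on $\{1,\dots,n\}$, and run the lexicographic algorithm (Algorithm 1) on $G$. Then for every $K\in\{1,\dots,n\}$, the probability that the returned code has cardinality at most $K$ is at least the probability that $\{1,\dots,K\}$ is an identifying code of $G$. In particular, the algorithm returns an identifying code of cardinality $i(H)$ with probability at least $1/\binom{n}{i(H)}$.
   Context: For a graph on vertex set $\{1,\dots,n\}$ (vertices ordered by the usual order of integers) and a vertex $v$, $N(v)=\{v\}\cup\{w : vw\in E\}$ is its closed neighbourhood. A set $C$ of vertices is an identifying code if the sets $N(v)\cap C$, $v$ a vertex, are all nonempty and pairwise distinct. A graph is twin-free if $N(v)\neq N(w)$ for all distinct vertices $v,w$. The lexicographic algorithm (Algorithm 1) on a graph $G$ with vertex set $\{1,\dots,n\}$: set $C_0=\emptyset$. For $j=1,2,\dots,n$ in turn: (i) if $N(j)\cap C_{j-1}=\emptyset$, set $C_j=C_{j-1}\cup\{\min N(j)\}$; (ii) otherwise, if there exists $k\in\{1,\dots,j-1\}$ with $N(k)\cap C_{j-1}=N(j)\cap C_{j-1}$, let $k$ be the least such index; if $N(j)\neq N(k)$ set $C_j=C_{j-1}\cup\{\min(N(j)\triangle N(k))\}$, while if $N(j)=N(k)$ the algorithm stops immediately and returns ''failure''; (iii) otherwise set $C_j=C_{j-1}$. If the algorithm never fails, it returns $C_n$. Here $\triangle$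 denotes symmetric difference. *)

(* Defs.v *)
From mathcomp Require Import all_boot all_fingroup.
Set Implicit Arguments. Unset Strict Implicit. Unset Printing Implicit Defensive.

(* Vertices are 'I_n; vertex i : 'I_n stands for the paper's vertex i+1,
   so the usual order on 'I_n is the paper's order on {1,...,n}. *)

Section Defs.
Variable n : nat.
Implicit Types (e : rel 'I_n) (C A B : {set 'I_n}).

Definition simple_graph e := symmetric e /\ irreflexive e.

Definition N e (v : 'I_n) : {set 'I_n} := [set w | (w == v) || e v w].

Definition twin_free e := forall v w : 'I_n, v != w -> N e v != N e w.

Definition is_idcode e C : bool :=
  [forall v, N e v :&: C != set0] &&
  [forall v, forall w, (v != w) ==> (N e v :&: C != N e w :&: C)].

(* minimum cardinality of an identifying code (n is a bound since for a
   twin-free graph the whole vertex set is an identifying code) *)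
Definition idnum e : nat := \big[minn/n]_(C : {set 'I_n} | is_idcode e C) #|C|.

Definition minv A (d : 'I_n) : 'I_n :=
  odflt d [pick x in A | [forall y in A, x <= y]].

Definition symdiff A B : {set 'I_n} := (A :\: B) :|: (B :\: A).

(* one step (index j) of Algorithm 1; None means "failure" *)
Definition lex_step e C (j : 'I_n) : option {set 'I_n} :=
  if N e j :&: C == set0 then Some (C :|: [set minv (N e j) j])
  else
    let Kset := [set k : 'I_n | (k < j) && (N e k :&: C == N e j :&: C)] in
    if Kset != set0 then
      let k := minv Kset j in
      if N e j == N e k then None
      else Some (C :|: [set minv (symdiff (N e j) (N e k)) j])
    else Some C.

Definition lex_alg e : option {set 'I_n} :=
  foldl (fun oc j => if oc is Some C then lex_step e C j else None)
        (Some set0) (enum 'I_n).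

Definition relabel e (s : {perm 'I_n}) : rel 'I_n :=
  fun i j => e (s^-1 i)%g (s^-1 j)%g.

End Defs.

(* Main.v *)
Require Import Defs.
From mathcomp Require Import all_boot all_fingroup.
Set Implicit Arguments. Unset Strict Implicit. Unset Printing Implicit Defensive.

Section S.
Variable n : nat.
Implicit Types (e : rel 'I_n) (C A B T : {set 'I_n}).

Lemma minvP A d : A != set0 -> minv A d \in A /\ forall y, y \in A -> minv A d <= y.
Proof.
move=> /set0Pn [x0 Hx0]; rewrite /minv; case: pickP => [x /andP [Hx /forall_inP Hm] | H0] /=.
  by split=> // y /Hm.
case: (arg_minnP (fun x : 'I_n => nat_of_ord x) Hx0) => x Hx Hm.
have Hx1 : x \in A := Hx; have := H0 x; rewrite /= Hx1 /= => /negbT /forall_inPn [y Hy]; by rewrite Hm.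
Qed.

Lemma foldl_None e l : foldl (fun oc j => if oc is Some C then lex_step e C j else None) None l = None.
Proof. by elim: l. Qed.

Lemma step_sub e K C j C' : is_idcode e [set i : 'I_n | i < K] ->
  C \subset [set i : 'I_n | i < K] -> lex_step e C j = Some C' -> C' \subset [set i : 'I_n | i < K].
Proof.
set T := [set i : 'I_n | i < K].
move=> /andP [/forallP Hne /forallP Hdist] HC; rewrite /lex_step.
case: ifP => [_ [<-] | _].
  rewrite subUset HC sub1set inE.
  have /set0Pn [y /setIP [Hy1 Hy2]] := Hne j.
  have HN : N e j != set0 by apply/set0Pn; exists y.
  have [_ Hm] := minvP j HN.
  by move: Hy2; rewrite inE; apply: leq_ltn_trans (Hm _ Hy1).
case: ifP => [HK | _]; last by move=> [<-].
have [Hk _] := minvP j HK.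
set k := minv _ j in Hk *.
move: Hk; rewrite inE => /andP [Hkj _].
have Hd : N e j :&: T != N e k :&: T.
  by have := Hdist j => /forallP /(_ k) /implyP; apply; rewrite neq_ltn Hkj orbT.
case: ifP => [/eqP E | _ [<-]]; first by rewrite E eqxx in Hd.
rewrite subUset HC sub1set.
have : exists y, (y \in T) && (y \in symdiff (N e j) (N e k)).
  apply/existsP; apply: contraR Hd => /existsPn Hy; apply/eqP/setP => y.
  move: (Hy y); rewrite !inE; case: (y < K) => //=; rewrite ?andbT ?andbF //.
  by case: (_ || e j y); case: (_ || e k y).
move=> [y /andP [HyT Hy]].
have HN : symdiff (N e j) (N e k) != set0 by apply/set0Pn; exists y.
have [_ Hm] := minvP j HN.
by move: HyT; rewrite !inE; apply: leq_ltn_trans (Hm _ Hy).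
Qed.

Lemma fold_sub e K l C : is_idcode e [set i : 'I_n | i < K] ->
  C \subset [set i : 'I_n | i < K] ->
  exists C', foldl (fun oc j => if oc is Some C then lex_step e C j else None) (Some C) l = Some C'
    /\ C' \subset [set i : 'I_n | i < K].
Proof.
move=> Hid; elim: l C => [|j l IH] C HC /=; first by exists C.
case E: (lex_step e C j) => [C'|].
  by apply: IH; apply: step_sub E.
exfalso; move: E; rewrite /lex_step.
case: ifP => [_ //|_]; case: ifP => [HK|_ //].
have [Hk _] := minvP j HK.
set k := minv _ j in Hk *.
move: Hk; rewrite inE => /andP [Hkj _].
case: ifP => [/eqP E _|_ //].
move: Hid => /andP [_ /forallP /(_ j) /forallP /(_ k) /implyP].
have Hjk : j != k by rewrite neq_ltn Hkj orbT. by move/(_ Hjk); rewrite E eqxx.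
Qed.

Lemma part1 e K : is_idcode e [set i : 'I_n | i < K] ->
  exists C, lex_alg e = Some C /\ C \subset [set i : 'I_n | i < K].
Proof. by move=> Hid; apply: fold_sub => //; apply: sub0set. Qed.


Definition Inv e C (m : nat) :=
  (forall v : 'I_n, v < m -> N e v :&: C != set0) /\
  (forall v w : 'I_n, v < m -> w < m -> v != w -> N e v :&: C != N e w :&: C).

Lemma ne_mono e C C' (v : 'I_n) : C \subset C' -> N e v :&: C != set0 -> N e v :&: C' != set0.
Proof.
move=> HC /set0Pn [x /setIP [H1 H2]]; apply/set0Pn; exists x.
by rewrite inE H1 (subsetP HC).
Qed.

Lemma dist_mono e C C' (v w : 'I_n) : C \subset C' ->
  N e v :&: C != N e w :&: C -> N e v :&: C' != N e w :&: C'.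
Proof.
move=> HC; apply: contra => /eqP E.
by rewrite -(setIidPr HC) !setIA E.
Qed.

Lemma step_inv e C (j : 'I_n) C' : Inv e C j -> lex_step e C j = Some C' -> Inv e C' j.+1.
Proof.
move=> [Hne Hd] Hs.
have Hsub : C \subset C' /\
   (N e j :&: C' != set0) /\ (forall v : 'I_n, v < j -> N e v :&: C' != N e j :&: C').
  move: Hs; rewrite /lex_step; case: ifP => [/eqP H0 [<-] | Hj0].
    have HN : N e j != set0 by apply/set0Pn; exists j; rewrite inE eqxx.
    have [Hx _] := minvP j HN.
    split; first exact: subsetUl.
    split; first by apply/set0Pn; exists (minv (N e j) j); rewrite in_setI Hx in_setU set11 orbT.
    move=> v Hv; apply: dist_mono (subsetUl _ _) _.
    by rewrite H0; apply: Hne.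
  case: ifP => [HK | HK [<-]]; last first.
    split=> //; split; first by rewrite Hj0.
    move=> v Hv; apply/negP => /eqP E; move/negbT: HK; rewrite negbK => /eqP HK0.
    have : v \in (set0 : {set 'I_n}) by rewrite -HK0 inE Hv E eqxx.
    by rewrite inE.
  have [Hk _] := minvP j HK.
  set k := minv _ j in Hk *.
  move: Hk; rewrite inE => /andP [Hkj /eqP Ek].
  case: ifP => [//| /negbT Hjk [<-]].
  have Hsd : symdiff (N e j) (N e k) != set0.
    apply: contraNN Hjk => /eqP E; apply/eqP/setP => y.
    move/setP: E => /(_ y); rewrite !inE.
    by case: (_ || e j y); case: (_ || e k y).
  have [Hx _] := minvP j Hsd.
  set x := minv _ j in Hx *.
  split; first exact: subsetUl.
  split; first by apply: ne_mono (subsetUl _ _) _; rewrite Hj0.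
  move=> v Hv; case: (eqVneq v k) => [-> | Hvk].
    apply/negP => /eqP /setP /(_ x).
    rewrite !inE eqxx orbT !andbT.
    by move: Hx; rewrite /symdiff !inE; case: ((x == j) || e j x); case: ((x == k) || e k x).
  apply: (@dist_mono e C); first exact: subsetUl. rewrite -Ek. exact: Hd.
move: Hsub => [HC [Hj Hvj]]; split.
  move=> v; rewrite ltnS leq_eqVlt => /orP [/eqP Ev | Hv].
    by have -> : v = j by apply: val_inj.
  exact: (ne_mono HC (Hne _ Hv)).
move=> v w; rewrite !ltnS => Hv Hw Hvw.
case: (eqVneq v j) => [Ev | Hv'].
  subst v; rewrite eq_sym; apply: Hvj; by rewrite ltn_neqAle Hw andbT eq_sym -val_eqE in Hvw *.
case: (eqVneq w j) => [Ew | Hw'].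
  subst w; apply: Hvj; by rewrite ltn_neqAle Hv andbT -val_eqE in Hv' *.
apply: (dist_mono HC (Hd _ _ _ _ Hvw)).
  by rewrite ltn_neqAle Hv andbT -val_eqE in Hv' *.
by rewrite ltn_neqAle Hw andbT -val_eqE in Hw' *.
Qed.


Lemma fold_inv e (l : seq 'I_n) m C C' : map val l = iota m (size l) -> Inv e C m ->
  foldl (fun oc j => if oc is Some C then lex_step e C j else None) (Some C) l = Some C' ->
  Inv e C' (m + size l).
Proof.
elim: l m C => [|j l IH] m C /=; first by rewrite addn0 => _ ? [<-].
move=> [Hj Hl] HI; case E: (lex_step e C j) => [C1|]; last by rewrite foldl_None.
move=> Hf; rewrite -addSnnS; apply: (IH _ C1 Hl _ Hf).
by rewrite -Hj in HI *; apply: step_inv HI E.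
Qed.

Lemma lex_correct e C : lex_alg e = Some C -> is_idcode e C.
Proof.
move=> Hf; have Hv : map val (enum 'I_n) = iota 0 (size (enum 'I_n)) by rewrite size_enum_ord val_enum_ord.
have := fold_inv Hv _ Hf.
have H0 : Inv e set0 0 by split.
rewrite size_enum_ord add0n => /(_ H0).
move=> [Hne Hd]; apply/andP; split.
  by apply/forallP => v; apply: Hne.
by apply/forallP => v; apply/forallP => w; apply/implyP; apply: Hd.
Qed.


Lemma N_relabel H (s : {perm 'I_n}) v : N (relabel H s) v = s @: N H (s^-1 v)%g.
Proof.
apply/setP => w.
have -> : (w \in s @: N H (s^-1 v)%g) = ((s^-1)%g w \in N H (s^-1 v)%g).
  by rewrite -{1}(permKV s w) mem_imset //; apply: perm_inj.
by rewrite !inE (inj_eq perm_inj).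
Qed.

Lemma idcode_relabel H (s : {perm 'I_n}) C : is_idcode H C -> is_idcode (relabel H s) (s @: C).
Proof.
have Etr v : N (relabel H s) v :&: s @: C = s @: (N H (s^-1 v)%g :&: C).
  by rewrite N_relabel imsetI //; move=> x y _ _; apply: perm_inj.
move=> /andP [/forallP Hne /forallP Hd]; apply/andP; split.
  by apply/forallP => v; rewrite Etr imset_eq0.
apply/forallP => v; apply/forallP => w; apply/implyP => Hvw.
rewrite !Etr (inj_eq (imset_inj (@perm_inj _ s))).
by move/forallP: (Hd (s^-1 v)%g) => /(_ (s^-1 w)%g) /implyP; apply; rewrite (inj_eq perm_inj).
Qed.

Lemma idcode_ext e e' C : e =2 e' -> is_idcode e C = is_idcode e' C.
Proof.
move=> Ee; have E v : N e v = N e' v by apply/setP => w; rewrite !inE Ee.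
rewrite /is_idcode; congr (_ && _); apply: eq_forallb => v; first by rewrite E.
by apply: eq_forallb => w; rewrite !E.
Qed.

Lemma idcode_unrelabel H (s : {perm 'I_n}) D : is_idcode (relabel H s) D -> is_idcode H ((s^-1)%g @: D).
Proof.
move=> /(idcode_relabel (s^-1)%g); rewrite (@idcode_ext _ H) //.
by move=> i j; rewrite /relabel !invgK !permK.
Qed.

Lemma idnum_le e C : is_idcode e C -> idnum e <= #|C|.
Proof.
rewrite /idnum unlock; move: (mem_index_enum C).
elim: (index_enum _) => [//|D r IH] /=; rewrite inE => /orP [/eqP <- -> | HC HCc].
  by rewrite geq_minl.
case: ifP => _; last exact: IH.
by apply: leq_trans (geq_minr _ _) (IH HC HCc).
Qed.

Lemma idnum_attained e : twin_free e -> exists2 C, is_idcode e C & #|C| = idnum e.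
Proof.
move=> Htf.
have HT : is_idcode e [set: 'I_n].
  apply/andP; split; first by apply/forallP => v; rewrite setIT; apply/set0Pn; exists v; rewrite inE eqxx.
  by apply/forallP => v; apply/forallP => w; apply/implyP => Hvw; rewrite !setIT; apply: Htf.
rewrite /idnum.
apply: (big_rec (fun x => exists2 C, is_idcode e C & #|C| = x)).
  by exists [set: 'I_n] => //; rewrite cardsT card_ord.
move=> C x HC [D HD HDx].
case: (leqP #|C| x) => Hle.
  by exists C => //; rewrite (minn_idPl Hle).
by exists D => //; rewrite (minn_idPr (ltnW Hle)).
Qed.

Lemma card_T K : K <= n -> #|[set i : 'I_n | i < K]| = K.
Proof.
move=> HK.
have -> : [set i : 'I_n | i < K] = widen_ord HK @: [set: 'I_K].
  apply/setP => i; rewrite inE; apply/idP/imsetP => [Hi | [j _ ->]]; last exact: (ltn_ord j).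
  by exists (Ordinal Hi) => //; apply: val_inj.
by rewrite card_imset ?cardsT ?card_ord //; move=> x y /(congr1 val) /= /val_inj.
Qed.


Lemma exists_perm (A B : {set 'I_n}) : #|A| = #|B| -> exists q : {perm 'I_n}, q @: A = B.
Proof.
move=> HAB.
have HABc : #|~: A| = #|~: B|.
  by apply/eqP; rewrite -(eqn_add2l #|A|) cardsC HAB cardsC.
pose g (X Y : {set 'I_n}) (x : 'I_n) := nth x (enum Y) (index x (enum X)).
have gin (X Y : {set 'I_n}) x : #|X| = #|Y| -> x \in X -> g X Y x \in Y.
  move=> HXY Hx; rewrite -mem_enum /g mem_nth // -cardE -HXY cardE index_mem mem_enum //.
have ginj (X Y : {set 'I_n}) x y : #|X| = #|Y| -> x \in X -> y \in X -> g X Y x = g X Y y -> x = y.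
  move=> HXY Hx Hy; rewrite /g.
  have Hix : index x (enum X) < size (enum Y) by rewrite -cardE -HXY cardE index_mem mem_enum.
  have Hiy : index y (enum X) < size (enum Y) by rewrite -cardE -HXY cardE index_mem mem_enum.
  rewrite (set_nth_default x y Hiy) => /eqP; rewrite nth_uniq ?enum_uniq // => /eqP Ei.
  have Hx' : x \in enum X by rewrite mem_enum.
  have Hy' : y \in enum X by rewrite mem_enum.
  by rewrite -(nth_index x Hx') -(nth_index x Hy') Ei.
pose f x := if x \in A then g A B x else g (~: A) (~: B) x.
have finj : injective f.
  move=> x y; rewrite /f; case: ifP => Hx; case: ifP => Hy.
  - exact: ginj.
  - move=> E; have := gin _ _ x HAB Hx; rewrite E.
    by have := gin _ _ y HABc; rewrite inE Hy => /(_ isT); rewrite inE => /negbTE ->.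
  - move=> E; have := gin _ _ y HAB Hy; rewrite -E.
    by have := gin _ _ x HABc; rewrite inE Hx => /(_ isT); rewrite inE => /negbTE ->.
  - by apply: ginj; rewrite // inE ?Hx ?Hy.
exists (perm finj); apply/eqP; rewrite eqEcard card_imset; last exact: perm_inj.
rewrite HAB leqnn andbT; apply/subsetP => _ /imsetP [x Hx ->].
by rewrite permE /f Hx; apply: gin.
Qed.

End S.

Theorem mainTheorem5 (n : nat) (H : rel 'I_n) :
  simple_graph H -> twin_free H ->
  (forall K : nat, 1 <= K <= n ->
     #|[set s : {perm 'I_n} | (is_idcode (relabel H s) [set i : 'I_n | i < K])]|
     <= #|[set s : {perm 'I_n} |
             if lex_alg (relabel H s) is Some C then #|C| <= K else false]|)
  /\
  n`! <= #|[set s : {perm 'I_n} |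
             if lex_alg (relabel H s) is Some C
             then is_idcode (relabel H s) C && (#|C| == idnum H)
             else false]| * 'C(n, idnum H).
Proof.
move=> _ Htf; split.
  move=> K /andP [_ HKn]; apply: subset_leq_card; apply/subsetP => s; rewrite !inE.
  move=> /part1 [C [-> HC]].
  by rewrite (leq_trans (subset_leq_card HC)) // card_T.
have [C0 HC0 HK] := idnum_attained Htf.
set K := idnum H in HK *.
have HKn : K <= n.
  by rewrite -HK; apply: leq_trans (max_card _) _; rewrite card_ord.
set T := [set i : 'I_n | i < K].
have HT : #|C0| = #|T| by rewrite card_T.
have [q Hq] := exists_perm HT.
set F := [set s : {perm 'I_n} | _].
have HF (s : {perm 'I_n}) : s @: C0 = T -> s \in F.
  move=> Hs; have := idcode_relabel s HC0; rewrite Hs => Hid.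
  have [C [HC Hsub]] := part1 Hid.
  rewrite inE HC (lex_correct HC) /=.
  have Hid' := idcode_unrelabel (lex_correct HC).
  have := idnum_le Hid'; rewrite card_imset; last exact: perm_inj.
  rewrite -/K => H1; rewrite eqn_leq H1 andbT.
  by rewrite (leq_trans (subset_leq_card Hsub)) // card_T.
set St := ('C_[set: {perm 'I_n}][C0 | 'P^*])%g.
have Hos : #|orbit 'P^* [set: {perm 'I_n}] C0| * #|St| = n`!.
  by rewrite card_orbit_stab cardsT card_Sn.
rewrite -Hos [X in _ <= X]mulnC; apply: leq_mul.
  have -> : 'C(n, K) = #|[set A : {set 'I_n} | #|A| == K]| by rewrite card_draws card_ord.
  apply: subset_leq_card; apply/subsetP => A.
  move=> /orbitP [a _ <-]; rewrite inE.
  change (#|[set a x | x in C0]| == K); rewrite card_imset ?HK //; exact: perm_inj.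
rewrite -(card_imset St (mulIg q)); apply: subset_leq_card; apply/subsetP => y Hy.
case/imsetP: Hy => t Ht Hy; subst y.
apply: HF; move: Ht => /setIP [_ /astab1P] Ht.
have Ht' : t @: C0 = C0 by [].
rewrite -Hq -[in RHS]Ht' -imset_comp; apply: eq_imset => x /=; by rewrite permM.
Qed.
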